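(* Consider the hierarchical Gaussian $K$-armed bandit and the algorithm HierTS described in the context. Let $c > 0$ be a constant such that $c\, \hat{\sigma}_{t,i}^{-2} \geq \hat{\sigma}_{t+1,i}^{-2}$ holds for every node $i \in \mathcal{V}$ and every round $t$. Fix any round $t$ and let $\psi_t = (\psi_t(1), \dots, \psi_t(L_t))$ be the list of nodes on the path from the root $\psi_t(1) = 1$ to the action node $\psi_t(L_t) = A_t$. Then for every $i \in [L_t]$, \[ \hat{\sigma}_{t+1, \psi_t(i)}^{-2} - \hat{\sigma}_{t, \psi_t(i)}^{-2} \geq c^{i - L_t} \bigg(\prod_{j=i+1}^{L_t} \frac{\hat{\sigma}_{t, \psi_t(j)}^4}{\sigma_{0, \psi_t(j)}^4}\bigg) \sigma^{-2}\,. \]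
   Context: Tree and model. Let $\mathcal{T}$ be a rooted tree with node set $\mathcal{V}$, root labeled $1$, in which every internal node has at least $2$ children. For a node $i \neq 1$, $\mathsf{pa}(i)$ is its parent; $\mathsf{ch}(i)$ is the set of children of $i$. The leaves form the action set $\mathcal{A}$, $|\mathcal{A}| = K$. Node parameters $\theta_{*, i} \in \mathbb{R}$ are generated as $\theta_{*, 1} \sim \mathcal{N}(\mu_1, \sigma_{0,1}^2)$ and, for $i \neq 1$, $\theta_{*, i} \mid \theta_{*, \mathsf{pa}(i)} \sim \mathcal{N}(\theta_{*, \mathsf{pa}(i)}, \sigma_{0,i}^2)$, with known $\mu_1$ and $\sigma_{0,i} > 0$. In each round $t$ the agent takes $A_t \in \mathcal{A}$ and observes $Y_t \sim \mathcal{N}(\theta_{*, A_t}, \sigma^2)$ (independent noise, known $\sigma > 0$). The history is $H_t = (A_\ell, Y_\ell)_{\ell < t}$. HierTS samples $\Theta_t$ exactly from the posterior of $(\theta_{*,i})_{i \in \mathcal{V}}$ given $H_t$ and takes $A_t = \arg\max_{a \in \mathcal{A}} \theta_{t,a}$. Conditional posterior variances. For a node $i \neq 1$, $\hat{\sigma}_{t,i}^2$ is the variance of $\theta_{*, i}$ conditioned on $H_t$ and on $\theta_{*, \mathsf{pa}(i)}$ (it does not depend on the parent's value); for the root, $\hat{\sigma}_{t,1}^2 = \mathrm{Var}(\theta_{*,1} \mid H_t)$. Explicitly, with $\mathcal{S}_{t,a} = \{\ell < t : A_\ell = a\}$: for an action node $a$, $\hat{\sigma}_{t,a}^{-2} =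 \sigma_{0,a}^{-2} + |\mathcal{S}_{t,a}| \sigma^{-2}$; for a non-action node $i$, $\hat{\sigma}_{t,i}^{-2} = \sigma_{0,i}^{-2} + \sum_{j \in \mathsf{ch}(i)} \tilde{\sigma}_{t,j}^{-2}$, where recursively $\tilde{\sigma}_{t,j}^{2} = \sigma_{0,j}^2 + \sigma^2/|\mathcal{S}_{t,j}|$ for an action node $j$ (with $\tilde{\sigma}_{t,j}^{-2} = 0$ if $|\mathcal{S}_{t,j}| = 0$) and $\tilde{\sigma}_{t,j}^{2} = \sigma_{0,j}^2 + \big(\sum_{k \in \mathsf{ch}(j)} \tilde{\sigma}_{t,k}^{-2}\big)^{-1}$ for a non-action node $j$. *)

(* Defs.v *)
From mathcomp Require Import all_boot all_order all_algebra.
Set Implicit Arguments. Unset Strict Implicit. Unset Printing Implicit Defensive.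
Import Order.TTheory GRing.Theory Num.Theory.
Local Open Scope ring_scope.

Section HierTree.
Variables (R : realFieldType) (V : finType) (root : V) (pa : V -> V).

Definition ch (i : V) : {set V} := [set j | (j != root) && (pa j == i)].

(* action nodes = leaves *)
Definition is_leaf (i : V) : bool := ch i == set0.

(* rooted tree: every node reaches the root by iterating the parent map,
   and the root is its own (dummy) parent *)
Definition is_rooted_tree : Prop :=
  pa root = root /\ forall i : V, exists k : nat, iter k pa i = root.

Definition internal_ge2 : Prop :=
  forall i : V, ~~ is_leaf i -> (1 < #|ch i|)%N.

Variables (s0 : V -> R) (s : R).
(* s0 i = sigma_{0,i}^2 (prior variances),  s = sigma^2 (noise variance),
   n a = |S_{t,a}| (number of pulls of action a). *)

(* tilde sigma_{t,j}^{-2}, by structural recursion on a fuel k; with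
   k = #|V| the fuel is never exhausted on a tree.  Convention: a node whose
   subtree has no observation has tilde precision 0 (infinite variance). *)
Fixpoint tprec (n : V -> nat) (k : nat) (j : V) : R :=
  match k with
  | O => 0
  | k'.+1 =>
    if is_leaf j then
      (if n j == 0%N then 0 else (s0 j + s / (n j)%:R)^-1)
    else
      let S := \sum_(l in ch j) tprec n k' l in
      if S == 0 then 0 else (s0 j + S^-1)^-1
  end.

(* hat sigma_{t,i}^{-2} : conditional posterior precision *)
Definition hprec (n : V -> nat) (i : V) : R :=
  if is_leaf i then (s0 i)^-1 + (n i)%:R / s
  else (s0 i)^-1 + \sum_(j in ch i) tprec n #|V| j.

End HierTree.

Definition pulls (V : finType) (A : nat -> V) (t : nat) (a : V) : nat :=
  \sum_(l < t) (A l == a).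

(* Main.v *)
Require Import Defs.
From mathcomp Require Import all_boot all_order all_algebra.
From Stdlib Require Import ClassicalEpsilon.
From mathcomp Require Import ring lra zify.
Import Order.TTheory GRing.Theory Num.Theory.
Set Implicit Arguments. Unset Strict Implicit.
Local Open Scope ring_scope.

Definition pb (P : Prop) : bool := if excluded_middle_informative P then true else false.
Lemma pbP (P : Prop) : reflect P (pb P).
Proof. rewrite /pb; case: excluded_middle_informative => H; by constructor. Qed.

Definition Dset (V : finType) (pa : V -> V) (j : V) : {set V} :=
  [set a | pb (exists m, iter m pa a = j)].

Lemma iter_root (V : finType) (root : V) (pa : V -> V) :
  pa root = root -> forall k, iter k pa root = root.
Proof. by move=> H; elim=> //= k ->. Qed.

Lemma cycle_root (V : finType) (root : V) (pa : V -> V) :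
  is_rooted_tree root pa -> forall m x, iter m.+1 pa x = x -> x = root.
Proof.
move=> [Hr Hx] m x Hc; have [k Hk] := Hx x.
have Hq : forall q, iter (q * m.+1) pa x = x.
  elim=> // q IH; by rewrite mulSn iterD IH Hc.
rewrite -(Hq k).
have -> : (k * m.+1 = (k * m.+1 - k) + k)%N.
  by rewrite subnK // leq_pmulr.
by rewrite iterD Hk iter_root.
Qed.

Lemma Dset_child (V : finType) (root : V) (pa : V -> V) :
  is_rooted_tree root pa -> forall j c, c \in ch root pa j ->
  (#|Dset pa c| < #|Dset pa j|)%N.
Proof.
move=> Ht j c; rewrite inE => /andP [Hcr /eqP Hpc].
apply: proper_card; apply/properP; split.
  apply/subsetP => a; rewrite !inE => /pbP [m Hm]; apply/pbP; exists m.+1.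
  by rewrite iterS Hm.
exists j; rewrite !inE; first by apply/pbP; exists 0%N.
apply/pbP => [[m Hm]].
have : iter m.+1 pa c = c by rewrite iterSr Hpc.
move/(cycle_root Ht) => E; by rewrite E eqxx in Hcr.
Qed.

Lemma Dset_ge1 (V : finType) (pa : V -> V) j : (0 < #|Dset pa j|)%N.
Proof. apply/card_gt0P; exists j; rewrite inE; apply/pbP; by exists 0%N. Qed.

Lemma tprec_fuel (R : realFieldType) (V : finType) (root : V) (pa : V -> V)
  (s0 : V -> R) (s : R) (n : V -> nat) :
  is_rooted_tree root pa ->
  forall k k' j, (#|Dset pa j| <= k)%N -> (#|Dset pa j| <= k')%N ->
  tprec root pa s0 s n k j = tprec root pa s0 s n k' j.
Proof.
move=> Ht; elim=> [|k IH] k' j Hk Hk'.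
  by move: (Dset_ge1 pa j); rewrite lt0n -leqn0 Hk.
case: k' Hk' => [|k'] Hk'.
  by move: (Dset_ge1 pa j); rewrite lt0n -leqn0 Hk'.
rewrite /=; case: ifP => // _.
rewrite (eq_bigr (fun l => tprec root pa s0 s n k' l)) //.
move=> l Hl; have := Dset_child Ht Hl => Hlt.
apply: IH; rewrite -ltnS; exact: leq_trans Hlt _.
Qed.

Lemma tprec_ge0 (R : realFieldType) (V : finType) (root : V) (pa : V -> V)
  (s0 : V -> R) (s : R) (n : V -> nat) :
  (forall i, 0 < s0 i) -> 0 < s ->
  forall k j, 0 <= tprec root pa s0 s n k j.
Proof.
move=> Hs0 Hs; elim=> [|k IH] j //=.
case: ifP => _.
  case: eqP => // _; rewrite invr_ge0 ltW // ltr_wpDr // divr_ge0 // ltW //.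
case: eqP => // /eqP HS; rewrite invr_ge0 ltW // ltr_wpDr // invr_ge0.
by apply: sumr_ge0 => l _.
Qed.

Lemma tprec_local (R : realFieldType) (V : finType) (root : V) (pa : V -> V)
  (s0 : V -> R) (s : R) (n n' : V -> nat) :
  forall k l, (forall a, (exists m, iter m pa a = l) -> n a = n' a) ->
  tprec root pa s0 s n k l = tprec root pa s0 s n' k l.
Proof.
elim=> [|k IH] l H //=.
rewrite H; last by exists 0%N.
case: ifP => // _.
rewrite (eq_bigr (fun l => tprec root pa s0 s n' k l)) //.
move=> c; rewrite inE => /andP [_ /eqP Hpc]; apply: IH => a [m Hm].
apply: H; exists m.+1; by rewrite iterS Hm.
Qed.
Lemma hprec_ge (R : realFieldType) (V : finType) (root : V) (pa : V -> V)
  (s0 : V -> R) (s : R) (n : V -> nat) :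
  (forall i, 0 < s0 i) -> 0 < s ->
  forall j, (s0 j)^-1 <= hprec root pa s0 s n j.
Proof.
move=> Hs0 Hs j; rewrite /hprec; case: ifP => _; rewrite lerDl.
  by rewrite divr_ge0 // ltW.
by apply: sumr_ge0 => l _; apply: tprec_ge0.
Qed.

Lemma tprec_hprec (R : realFieldType) (V : finType) (root : V) (pa : V -> V)
  (s0 : V -> R) (s : R) (n : V -> nat) :
  is_rooted_tree root pa ->
  (forall i, 0 < s0 i) -> 0 < s ->
  forall k j, (#|Dset pa j| <= k)%N ->
  tprec root pa s0 s n k j =
    (hprec root pa s0 s n j - (s0 j)^-1) / (s0 j * hprec root pa s0 s n j).
Proof.
move=> Ht Hs0 Hs [|k] j Hk.
  by move: (Dset_ge1 pa j); rewrite lt0n -leqn0 Hk.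
have s0j := Hs0 j; have s0n : s0 j != 0 by rewrite gt_eqF.
rewrite /= /hprec; case: ifP => _.
  case: eqP => [->|/eqP nn]; first by rewrite /= mul0r addr0 subrr mul0r.
  have nR : (n j)%:R != 0 :> R by rewrite pnatr_eq0.
  have sn : s != 0 by rewrite gt_eqF.
  have a1 : 0 <= (n j)%:R / s by rewrite divr_ge0 // ltW.
  have a2 : 0 <= s / (n j)%:R by rewrite divr_ge0 // ltW.
  have a3 : 0 < (s0 j)^-1 by rewrite invr_gt0.
  have Hp : 0 < (s0 j)^-1 + (n j)%:R / s by lra.
  have Hp' : s0 j + s / (n j)%:R != 0 by rewrite gt_eqF //; lra.
  have Hp2 : s0 j * ((s0 j)^-1 + (n j)%:R / s) != 0.
    by rewrite mulf_neq0 // gt_eqF.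
  rewrite addrAC subrr add0r; field.
  have a4 : 0 <= (n j)%:R * s0 j by rewrite mulr_ge0 // ltW.
  rewrite sn s0n nR /= andbT gt_eqF //; lra.
have -> : \sum_(l in ch root pa j) tprec root pa s0 s n #|V| l =
          \sum_(l in ch root pa j) tprec root pa s0 s n k l.
  apply: eq_bigr => l Hl; apply: (tprec_fuel s0 s n Ht).
    exact: max_card.
  rewrite -ltnS; exact: leq_trans (Dset_child Ht Hl) Hk.
set S := \sum_(l in _) _.
have S0 : 0 <= S by apply: sumr_ge0 => l _; apply: tprec_ge0.
case: eqP => [->|/eqP SN]; first by rewrite addr0 subrr mul0r.
have Sp : 0 < S by rewrite lt_def SN.
rewrite addrAC subrr add0r.
have H1 : s0 j + S^-1 != 0 by rewrite gt_eqF // ltr_pwDl ?invr_ge0 // ltW.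
have H2 : s0 j * ((s0 j)^-1 + S) != 0 by rewrite mulf_neq0 // gt_eqF // ltr_pwDl ?invr_gt0.
field.
have a5 : 0 <= S * s0 j by rewrite mulr_ge0 // ltW.
rewrite s0n SN /= andbT gt_eqF //; lra.
Qed.
Lemma alg_step (R : realFieldType) (s0 h h' c Y : R) :
  0 < s0 -> 0 < h -> 0 < h' -> 0 < c -> h' <= c * h -> 0 <= Y -> Y <= h' - h ->
  c^-1 * (h^-1 / s0) ^+ 2 * Y <= (h' - s0^-1) / (s0 * h') - (h - s0^-1) / (s0 * h).
Proof.
move=> s0p hp hp' cp hc Y0 Yh.
have D0 : 0 <= h' - h by apply: le_trans Yh.
have E : (h' - s0^-1) / (s0 * h') - (h - s0^-1) / (s0 * h) - c^-1 * (h^-1 / s0) ^+ 2 * (h' - h)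
   = (h' - h) * (c * h - h') / (c * s0 ^+ 2 * h ^+ 2 * h').
  by field; rewrite !gt_eqF.
have : 0 <= (h' - h) * (c * h - h') / (c * s0 ^+ 2 * h ^+ 2 * h').
  by rewrite divr_ge0 // ?mulr_ge0 // ?subr_ge0 // ?ltW.
rewrite -E subr_ge0 => H; apply: le_trans H.
apply: ler_wpM2l => //; rewrite mulr_ge0 ?invr_ge0 ?ltW // ?exprn_ge0 //.
by rewrite exprn_gt0 // divr_gt0 ?invr_gt0.
Qed.

Local Close Scope ring_scope.
Lemma path_iter (V : finType) (pa : V -> V) (root : V) (L : nat) (psi : nat -> V)
  (Hpsi : forall k : nat, (1 <= k < L)%N -> pa (psi k.+1) = psi k /\ psi k.+1 != root) :
  forall b m, (b <= L)%N -> (m < b)%N -> iter m pa (psi b) = psi (b - m)%N.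
Proof.
move=> b; elim=> [|m IH] Hb Hm; first by rewrite subn0.
rewrite iterS IH ?(ltnW Hm) //.
have -> : (b - m = (b - m.+1).+1)%N by lia.
have Hk : (1 <= b - m.+1 < L)%N by apply/andP; split; lia.
by case: (Hpsi _ Hk).
Qed.

Lemma path_inj (V : finType) (pa : V -> V) (root : V) (L : nat) (psi : nat -> V)
  (Htree : is_rooted_tree root pa)
  (Hpsi : forall k : nat, (1 <= k < L)%N -> pa (psi k.+1) = psi k /\ psi k.+1 != root) :
  forall a b, (1 <= a)%N -> (a < b)%N -> (b <= L)%N -> psi a = psi b -> False.
Proof.
move=> a b Ha Hab HbL E.
have Hx : iter (b - a)%N pa (psi b) = psi b.
  rewrite (path_iter Hpsi HbL); last lia.
  by have -> : (b - (b - a) = a)%N by lia.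
have : psi b = root.
  apply: (cycle_root Htree (m := (b - a).-1)); by rewrite prednK // subn_gt0.
case: b Hab HbL {Hx} E => // b Hab HbL.
move=> E; have Hk : (1 <= b < L)%N by lia.
by case: (Hpsi b Hk) => _ /eqP.
Qed.
Local Open Scope ring_scope.
Theorem lemma3 (R : realFieldType) (V : finType) (root : V) (pa : V -> V)
  (s0 : V -> R) (s : R) (c : R) (A : nat -> V)
  (Htree : is_rooted_tree root pa)
  (Hint : internal_ge2 root pa)
  (Hs0 : forall i : V, 0 < s0 i)
  (Hs : 0 < s)
  (HA : forall t : nat, is_leaf root pa (A t))
  (Hc : 0 < c)
  (Hcond : forall (t : nat) (i : V),
      hprec root pa s0 s (pulls A t.+1) i <= c * hprec root pa s0 s (pulls A t) i)
  (t : nat) (L : nat) (psi : nat -> V)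
  (HL : (1 <= L)%N)
  (Hpsi1 : psi 1%N = root)
  (HpsiL : psi L = A t)
  (Hpsi : forall k : nat, (1 <= k < L)%N ->
      pa (psi k.+1) = psi k /\ psi k.+1 != root) :
  forall i : nat, (1 <= i <= L)%N ->
    hprec root pa s0 s (pulls A t.+1) (psi i) - hprec root pa s0 s (pulls A t) (psi i)
    >= (c ^+ (L - i))^-1
       * (\prod_(i.+1 <= j < L.+1)
            ((hprec root pa s0 s (pulls A t) (psi j))^-1 / s0 (psi j)) ^+ 2)
       * s^-1.
Proof.
have Hn' : forall a, pulls A t.+1 a = (pulls A t a + (A t == a))%N.
  by move=> a; rewrite /pulls big_ord_recr.
suffices Main : forall d, (d < L)%N ->
    hprec root pa s0 s (pulls A t.+1) (psi (L - d)%N)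
      - hprec root pa s0 s (pulls A t) (psi (L - d)%N)
    >= (c ^+ (L - (L - d)%N))^-1
       * (\prod_((L - d).+1 <= j < L.+1)
            ((hprec root pa s0 s (pulls A t) (psi j))^-1 / s0 (psi j)) ^+ 2)
       * s^-1.
  move=> i /andP [Hi1 HiL].
  have E : (L - (L - i) = i)%N by lia.
  have := Main (L - i)%N; rewrite E; apply; lia.
elim=> [|d IH] Hd.
  rewrite !subn0 subnn expr0 invr1 mul1r big_geq // mul1r HpsiL /hprec HA.
  rewrite Hn' eqxx natrD.
  rewrite le_eqVlt; apply/orP; left; apply/eqP; rewrite /=; ring.
have Hi1 : (1 <= L - d.+1 < L)%N by apply/andP; split; lia.
have E1 : (L - d = (L - d.+1).+1)%N by lia.
move: (IH (ltnW Hd)); rewrite E1.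
move: (L - d.+1)%N Hi1 => i Hi1 IHi.
case: (Hpsi i Hi1) => Hpq Hqr.
have Hq : psi i.+1 \in ch root pa (psi i) by rewrite inE Hqr Hpq eqxx.
have Hnl : is_leaf root pa (psi i) = false.
  by rewrite /is_leaf; apply/negbTE/set0Pn; exists (psi i.+1).
(* descendants of other children do not contain A t *)
have Hother : forall l, l \in ch root pa (psi i) -> l != psi i.+1 ->
    tprec root pa s0 s (pulls A t.+1) #|V| l = tprec root pa s0 s (pulls A t) #|V| l.
  move=> l; rewrite inE => /andP [Hlr /eqP Hpl] Hlq.
  apply: tprec_local => a [m Hm]; rewrite Hn'.
  case: eqP => [Ea|]; last by rewrite addn0.
  exfalso; move: Hm; rewrite -Ea -HpsiL => Hm.
  case: (ltnP m L) => HmL.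
    move: Hm; rewrite (path_iter Hpsi (leqnn L) HmL) => Hm.
    have : (L - m)%N != 1%N by apply: contraNneq Hlr => E; rewrite -Hm E Hpsi1.
    move=> Hk1.
    have Hk : (1 <= (L - m).-1 < L)%N by apply/andP; split; lia.
    case: (Hpsi _ Hk) => Hpa _.
    have E2 : ((L - m).-1.+1 = L - m)%N by lia.
    rewrite E2 Hm Hpl in Hpa.
    case: (ltngtP (L - m).-1 i) => Hc1.
    - by apply: (path_inj Htree Hpsi _ Hc1 _ (esym Hpa)); lia.
    - by apply: (path_inj Htree Hpsi _ Hc1 _ Hpa); lia.
    - by move: Hlq; rewrite -Hm -E2 Hc1 eqxx.
  have E3 : m = ((m - (L - 1)) + (L - 1))%N by lia.
  move: Hm; rewrite E3 iterD (path_iter Hpsi (leqnn L)); last by lia.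
  have -> : (L - (L - 1) = 1)%N by lia.
  rewrite Hpsi1 iter_root; last by case: Htree.
  by move=> E; move: Hlr; rewrite E eqxx.
have Hdiff : hprec root pa s0 s (pulls A t.+1) (psi i) - hprec root pa s0 s (pulls A t) (psi i)
   = tprec root pa s0 s (pulls A t.+1) #|V| (psi i.+1)
     - tprec root pa s0 s (pulls A t) #|V| (psi i.+1).
  rewrite /hprec Hnl.
  rewrite [X in _ + X - _](bigD1 (psi i.+1) Hq) [X in _ - (_ + X)](bigD1 (psi i.+1) Hq) /=.
  rewrite [X in _ + (_ + X) - _](eq_bigr (fun l => tprec root pa s0 s (pulls A t) #|V| l)); last first.
    by move=> l /andP [Hl Hlq]; apply: Hother.
  ring.
rewrite Hdiff !(tprec_hprec _ Htree Hs0 Hs (max_card _)).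
set Y := _ * _ * s^-1 in IHi.
have HY : 0 <= Y.
  rewrite /Y; apply: mulr_ge0; last by rewrite invr_ge0 ltW.
  apply: mulr_ge0; first by rewrite invr_ge0 exprn_ge0 // ltW.
  by apply: prodr_ge0 => j _; rewrite exprn_ge0 // divr_ge0 ?invr_ge0 ?ltW //;
     apply: lt_le_trans (hprec_ge _ _ _ Hs0 Hs _) ; rewrite ?invr_gt0.
have hpos : forall n, 0 < hprec root pa s0 s n (psi i.+1).
  move=> n; apply: lt_le_trans (hprec_ge _ _ _ Hs0 Hs _) => //; by rewrite invr_gt0.
have H := alg_step (Hs0 (psi i.+1)) (hpos _) (hpos _) Hc (Hcond t _) HY IHi.
apply: (le_trans _ H); rewrite le_eqVlt; apply/orP; left; apply/eqP.
rewrite /Y (big_ltn (_ : (i.+1 < L.+1)%N)); last by lia.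
have -> : (L - i = (L - i.+1).+1)%N by lia.
by rewrite exprS invfM; ring.
Qed.
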